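(* Let $\sharp\in\{cy,ra\}$ and assume (ER$\sharp$). Then for all $\boldsymbol\zeta,\alpha\in\mathbb R^M$ the map $\mathcal L^{[\alpha]*}_{\sharp,\boldsymbol\zeta}$ is a primitive completely positive map; in particular its spectral radius $r^\sharp_{\boldsymbol\zeta}(\alpha)$ is positive.
   Context: Finite-dimensional $\mathcal H_{\mathcal S},\mathcal H_{\mathcal E_j}$ ($j=1..M$), self-adjoint $H_{\mathcal S},H_{\mathcal E_j}$, self-adjoint $V_j$, $\tau_j>0$, $U_j=e^{-i\tau_j(H_{\mathcal S}\otimes\mathrm{Id}+\mathrm{Id}\otimes H_{\mathcal E_j}+V_j)}$; $\beta_{\rm ref}>0$; for $\boldsymbol\zeta\in\mathbb R^M$, $\rho_{\mathcal E_j}$ Gibbs state of $H_{\mathcal E_j}$ at $\beta_{\rm ref}-\zeta_j$; $\mathcal L_j(\rho)=\mathrm{Tr}_{\mathcal H_{\mathcal E_j}}(U_j(\rho\otimes\rho_{\mathcal E_j})U_j^* )$, $\mathcal L_{cy}=\mathcal L_M\circ\cdots\circ\mathcal L_1$, $\mathcal L_{ra}=\frac1M\sum\mathcal L_j$. Deformed maps $\mathcal L_j^{[\alpha]*}(X)=\mathrm{Tr}_{\mathcal H_{\mathcal E_j}}((\mathrm{Id}\otimes\rho_{\mathcal E_j}^{1-\alpha_j})U_j^*(X\otimes\rho_{\mathcal E_j}^{\alpha_j})U_j)$, $\mathcal L_{cy}^{[\alpha]*}=\mathcal L_1^{[\alpha]*}\circ\cdots\circ\mathcal L_M^{[\alpha]*}$,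 $\mathcal L_{ra}^{[\alpha]*}=\frac1M\sum\mathcal L_j^{[\alpha]*}$. A CP map with Kraus operators $V_i$ is primitive if for some $n$ the products $V_{i_1}\cdots V_{i_n}$ span all operators. (ER$\sharp$): $\mathcal L_{\sharp,\boldsymbol\zeta}$ is primitive for some $\boldsymbol\zeta$. *)

(* Defs.v *)
From HB Require Import structures.
From mathcomp Require Import all_boot all_order all_algebra.
From mathcomp Require Import sesquilinear spectral.
From mathcomp Require Import complex.
From mathcomp Require mxtens.
From mathcomp Require Import classical_sets reals sequences exp trigo.
Set Implicit Arguments.
Unset Strict Implicit.
Unset Printing Implicit Defensive.
Import Order.TTheory GRing.Theory Num.Theory.
Local Open Scope ring_scope.
Local Open Scope sesquilinear_scope.

Section QDefs.
Variable R : realType.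
Local Notation C := R[i].

(** Functional calculus for a (self-adjoint) matrix A = P^{-1} diag(λ) P
    (spectral decomposition of mathcomp's spectral.v): f(A) := P^{-1} diag(f λ) P.
    For self-adjoint A the eigenvalues λ are real, and f : R -> C is
    applied to their real parts. *)
Definition hfun n (f : R -> C) (A : 'M[C]_n) : 'M[C]_n :=
  invmx (spectralmx A) *m
  diag_mx (map_mx (fun z : C => f (complex.Re z)) (spectral_diag A)) *m
  spectralmx A.

Definition rfun (g : R -> R) : R -> C := fun x => Complex (g x) 0.

Definition expmi (t : R) : R -> C := fun x => Complex (cos (t * x)) (- sin (t * x)).

Definition unitary_evol n (tau : R) (K : 'M[C]_n) : 'M[C]_n := hfun (expmi tau) K.

Definition gibbs n (b : R) (H : 'M[C]_n) : 'M[C]_n :=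
  let E := hfun (rfun (fun x => expR (- (b * x)))) H in (\tr E)^-1 *: E.

Definition mxpowR n (rho : 'M[C]_n) (a : R) : 'M[C]_n :=
  hfun (rfun (fun x => powR x a)) rho.

Definition kron m p (A : 'M[C]_m) (B : 'M[C]_p) : 'M[C]_(m * p) :=
  mxtens.tensmx A B.

Definition ptrace2 m p (X : 'M[C]_(m * p)) : 'M[C]_m :=
  \matrix_(i, j) \sum_(l < p)
     X (mxtens.mxtens_index (i, l)) (mxtens.mxtens_index (j, l)).

Definition Ugen n (kj : nat) (HS : 'M[C]_n.+1) (HE : 'M[C]_kj.+1)
  (V : 'M[C]_(n.+1 * kj.+1)) (tau : R) : 'M[C]_(n.+1 * kj.+1) :=
  unitary_evol tau (kron HS 1%:M + kron 1%:M HE + V).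

Definition Lj n kj HS HE V tau (b : R) (rho : 'M[C]_n.+1) : 'M[C]_n.+1 :=
  let U := @Ugen n kj HS HE V tau in
  ptrace2 (U *m kron rho (gibbs b HE) *m U ^t*).

Definition Ljdual n kj HS HE V tau (b a : R) (X : 'M[C]_n.+1) : 'M[C]_n.+1 :=
  let U := @Ugen n kj HS HE V tau in
  let rE := gibbs b HE in
  ptrace2 (kron 1%:M (mxpowR rE (1 - a)) *m U ^t* *m kron X (mxpowR rE a) *m U).

Inductive protocol := cy | ra.

Section Model.
Variables (n M : nat) (k : 'I_M -> nat).
Variables (HS : 'M[C]_n.+1) (HE : forall j, 'M[C]_((k j).+1))
  (V : forall j, 'M[C]_(n.+1 * (k j).+1)) (tau : 'I_M -> R) (beta_ref : R).

Definition Lmap (j : 'I_M) (zeta : 'I_M -> R) :=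
  @Lj n (k j) HS (HE j) (V j) (tau j) (beta_ref - zeta j).

Definition Lmapdual (j : 'I_M) (zeta alpha : 'I_M -> R) :=
  @Ljdual n (k j) HS (HE j) (V j) (tau j) (beta_ref - zeta j) (alpha j).

Definition Lsharp (s : protocol) (zeta : 'I_M -> R) (X : 'M[C]_n.+1) : 'M[C]_n.+1 :=
  match s with
  | cy => foldl (fun Y j => Lmap j zeta Y) X (enum 'I_M)
  | ra => (M%:R)^-1 *: \sum_(j < M) Lmap j zeta X
  end.

Definition Lsharpdual (s : protocol) (zeta alpha : 'I_M -> R) (X : 'M[C]_n.+1)
  : 'M[C]_n.+1 :=
  match s with
  | cy => foldr (fun j Y => Lmapdual j zeta alpha Y) X (enum 'I_M)
  | ra => (M%:R)^-1 *: \sum_(j < M) Lmapdual j zeta alpha X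
  end.
End Model.

Definition kraus_rep n (L : 'M[C]_n.+1 -> 'M[C]_n.+1) (p : nat)
  (W : 'I_p -> 'M[C]_n.+1) : Prop :=
  forall X, L X = \sum_(i < p) W i *m X *m (W i) ^t*.

Definition primitive_cp n (L : 'M[C]_n.+1 -> 'M[C]_n.+1) : Prop :=
  exists (p : nat) (W : 'I_p -> 'M[C]_n.+1),
    kraus_rep L W /\
    exists m : nat, (0 < m)%N /\
      forall Y : 'M[C]_n.+1, exists c : {ffun 'I_m -> 'I_p} -> C,
        Y = \sum_(s : {ffun 'I_m -> 'I_p}) c s *: \prod_(i < m) W (s i).

Definition eigenvalue_map n (L : 'M[C]_n.+1 -> 'M[C]_n.+1) (z : C) : Prop :=
  exists X : 'M[C]_n.+1, X != 0 /\ L X = z *: X.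

Definition spectral_radius n (L : 'M[C]_n.+1 -> 'M[C]_n.+1) : R :=
  sup [set r : R | exists z : C, eigenvalue_map L z /\ r = Normc.normc z].

End QDefs.

(* Main.v *)
Require Import Defs.
From HB Require Import structures.
From mathcomp Require Import all_boot all_order all_algebra.
From mathcomp Require Import sesquilinear spectral.
From mathcomp Require Import complex.
From mathcomp Require mxtens.
From mathcomp Require Import classical_sets reals sequences exp trigo.
Import Order.TTheory GRing.Theory Num.Theory.
Local Open Scope ring_scope.
Local Open Scope sesquilinear_scope.
Set Implicit Arguments.
Unset Strict Implicit.
Unset Printing Implicit Defensive.

Section Kraus.
Variable R : realType.
Local Notation C := R[i].
Variable n : nat.
Local Notation MM := 'M[C]_n.+1.

Definition krausF (L : MM -> MM) (I : finType) (W : I -> MM) :=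
  forall X, L X = \sum_(i : I) W i *m X *m (W i)^t*.

Definition inspan (I : finType) (W : I -> MM) (X : MM) :=
  exists c : I -> C, X = \sum_(i : I) c i *: W i.

Definition fullF (I : finType) (W : I -> MM) := forall X, inspan W X.

Lemma inspan_mem (I : finType) (W : I -> MM) i : inspan W (W i).
Proof.
exists (fun j => (j == i)%:R); rewrite (bigD1 i) //= eqxx scale1r big1 ?addr0 //.
by move=> j /negbTE ->; rewrite scale0r.
Qed.

Lemma inspan0 (I : finType) (W : I -> MM) : inspan W 0.
Proof. by exists (fun _ => 0); rewrite big1 // => i _; rewrite scale0r. Qed.

Lemma inspanD (I : finType) (W : I -> MM) X Y :
  inspan W X -> inspan W Y -> inspan W (X + Y).
Proof.
move=> [c ->] [d ->]; exists (fun i => c i + d i).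
by rewrite -big_split /=; apply: eq_bigr => i _; rewrite scalerDl.
Qed.

Lemma inspanZ (I : finType) (W : I -> MM) a X :
  inspan W X -> inspan W (a *: X).
Proof.
move=> [c ->]; exists (fun i => a * c i).
by rewrite scaler_sumr; apply: eq_bigr => i _; rewrite scalerA.
Qed.

Lemma inspan_sum (I J : finType) (W : I -> MM) (F : J -> MM) :
  (forall j, inspan W (F j)) -> inspan W (\sum_j F j).
Proof.
move=> H; elim/big_ind: _ => //; [exact: inspan0 | exact: inspanD].
Qed.

Lemma inspan_trans (I J : finType) (W : I -> MM) (K : J -> MM) X :
  (forall i, inspan K (W i)) -> inspan W X -> inspan K X.
Proof.
move=> H [c ->]; apply: inspan_sum => i; exact: inspanZ.
Qed.

Lemma adj_sum (J : finType) (F : J -> MM) :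
  (\sum_j F j)^t* = \sum_j (F j)^t*.
Proof.
apply/matrixP => a b; rewrite !mxE summxE rmorph_sum summxE; apply: eq_bigr => j _.
by rewrite !mxE.
Qed.

Lemma adjZ a (X : MM) : (a *: X)^t* = a^* *: X^t*.
Proof. by apply/matrixP => i j; rewrite !mxE rmorphM. Qed.

Lemma adjM (X Y : MM) : (X *m Y)^t* = Y^t* *m X^t*.
Proof. by rewrite trmx_mul map_mxM. Qed.

Lemma adjK (X : MM) : X^t*^t* = X.
Proof. exact: trmxCK. Qed.

Lemma inspan_adj (I : finType) (W : I -> MM) X :
  inspan W X -> inspan (fun i => (W i)^t*) (X ^t*).
Proof.
move=> [c ->]; exists (fun i => (c i)^*).
by rewrite adj_sum; apply: eq_bigr => i _; rewrite adjZ.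
Qed.

Lemma inspan_mul (I J : finType) (W : I -> MM) (K : J -> MM) X Y :
  inspan W X -> inspan K Y -> inspan (fun p : I * J => W p.1 *m K p.2) (X *m Y).
Proof.
move=> [c ->] [d ->]; exists (fun p => c p.1 * d p.2).
rewrite mulmx_suml -(pair_bigA _ (fun i j => (c i * d j) *: (W i *m K j))) /=.
apply: eq_bigr => i _.
rewrite mulmx_sumr; apply: eq_bigr => j _.
by rewrite -scalemxAl -scalemxAr scalerA.
Qed.

Definition prodfam (I : finType) (W : I -> MM) m (s : {ffun 'I_m -> I}) : MM :=
  \prod_(i < m) W (s i).

Lemma prod_scale (J : Type) (r : seq J) (a : J -> C) (B : J -> MM) :
  \prod_(j <- r) (a j *: B j) = (\prod_(j <- r) a j) *: \prod_(j <- r) B j.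
Proof.
elim: r => [|j r IH]; first by rewrite !big_nil scale1r.
by rewrite !big_cons IH -scalerAl -scalerAr scalerA.
Qed.

Lemma inspan_prod (I : finType) (W : I -> MM) m (g : 'I_m -> MM) :
  (forall i, inspan W (g i)) -> inspan (prodfam W (m:=m)) (\prod_(i < m) g i).
Proof.
move=> H.
have [c Hc] : exists c : 'I_m -> I -> C, forall i, g i = \sum_j c i j *: W j.
  have Hx i : exists f : {ffun I -> C}, g i == \sum_j f j *: W j.
    by case: (H i) => c Hc; exists [ffun j => c j]; apply/eqP; rewrite Hc;
      apply: eq_bigr => j _; rewrite ffunE.
  by exists (fun i j => xchoose (Hx i) j) => i; apply/eqP; exact: (xchooseP (Hx i)).
exists (fun s : {ffun 'I_m -> I} => \prod_(i < m) c i (s i)).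
under eq_bigr do rewrite Hc.
rewrite bigA_distr_bigA /=; apply: eq_bigr => s _.
by rewrite prod_scale.
Qed.

End Kraus.

Section Unique.
Variable R : realType.
Local Notation C := R[i].
Variable n : nat.
Local Notation MM := 'M[C]_n.+1.

Lemma vspan_inspan (I : finType) (A : I -> MM) X :
  X \in (\sum_(i : I) <[A i]>)%VS -> inspan A X.
Proof.
move=> /memv_sumP [vs Hvs ->].
have Hx i : exists k : C, vs i == k *: A i.
  by have /vlineP [k ->] := Hvs i isT; exists k.
by exists (fun i => xchoose (Hx i)); apply: eq_bigr => i _; apply/eqP;
  exact: (xchooseP (Hx i)).
Qed.

Lemma inspan_vspan (I : finType) (A : I -> MM) X :
  inspan A X -> X \in (\sum_(i : I) <[A i]>)%VS.
Proof.
move=> [c ->]; apply: memv_sumr => i _; apply: memvZ; exact: memv_line.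
Qed.

End Unique.

Section Choi.
Variable R : realType.
Local Notation C := R[i].
Variable n : nat.
Local Notation MM := 'M[C]_n.+1.
Local Notation II := ('I_n.+1 * 'I_n.+1)%type.

Definition phiZ (Z : II -> C) (Y : MM) := \sum_(p : II) Z p * Y p.1 p.2.

Lemma delta_sandwich (F : MM) l l' k k' :
  (F *m delta_mx l l' *m F ^t*) k k' = F k l * (F k' l')^*.
Proof.
rewrite mxE (bigD1 l') //= big1 ?addr0; last first.
  move=> x /negbTE Hx; rewrite mxE big1 ?mul0r // => y _.
  by rewrite mxE Hx andbF mulr0.
rewrite !mxE (bigD1 l) //= big1 ?addr0; last first.
  by move=> y /negbTE Hy; rewrite mxE Hy mulr0.
by rewrite mxE !eqxx mulr1.
Qed.

Lemma choi_id (L : MM -> MM) (I : finType) (A : I -> MM) Z : krausF L A ->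
  \sum_i phiZ Z (A i) * (phiZ Z (A i))^* =
  \sum_(p : II) \sum_(q : II) Z p * (Z q)^* * (L (delta_mx p.2 q.2)) p.1 q.1.
Proof.
move=> HL.
have -> : \sum_i phiZ Z (A i) * (phiZ Z (A i))^* =
   \sum_i \sum_(p : II) \sum_(q : II) Z p * (Z q)^* * (A i p.1 p.2 * (A i q.1 q.2)^*).
  apply: eq_bigr => i _; rewrite /phiZ rmorph_sum mulr_suml.
  apply: eq_bigr => p _; rewrite mulr_sumr; apply: eq_bigr => q _.
  by rewrite rmorphM; rewrite -!mulrA; congr (_ * _); rewrite mulrCA.
rewrite exchange_big; apply: eq_bigr => p _.
rewrite exchange_big; apply: eq_bigr => q _.
rewrite HL summxE mulr_sumr; apply: eq_bigr => i _.
by rewrite delta_sandwich.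
Qed.

End Choi.

Section Uniq2.
Variable R : realType.
Local Notation C := R[i].
Variable n : nat.
Local Notation MM := 'M[C]_n.+1.
Local Notation II := ('I_n.+1 * 'I_n.+1)%type.

Lemma mx_sum_delta_pair (Y : MM) :
  Y = \sum_(p : II) Y p.1 p.2 *: delta_mx p.1 p.2.
Proof.
rewrite {1}[Y]matrix_sum_delta -(pair_bigA _ (fun i j => Y i j *: delta_mx i j)) /=.
done.
Qed.

Lemma kraus_unique (L : MM -> MM) (I J : finType) (A : I -> MM) (B : J -> MM) :
  krausF L A -> krausF L B -> forall j, inspan A (B j).
Proof.
move=> HA HB j; set U := (\sum_(i : I) <[A i]>)%VS.
apply: vspan_inspan; case: (boolP (B j \in U)) => // Hnot; exfalso.
pose f := fun Y : MM => Y - projv U Y.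
have fA i : f (A i) = 0.
  by rewrite /f projv_id ?subrr //; apply: inspan_vspan; exact: inspan_mem.
have fB : f (B j) != 0.
  apply/eqP => H; move/negP: Hnot; apply.
  have -> : B j = projv U (B j) by apply/eqP; rewrite -subr_eq0 -/(f (B j)) H.
  exact: memv_proj.
have [k0 [l0 Hkl]] : exists k0 l0, f (B j) k0 l0 != 0.
  case: (pickP (fun p : II => f (B j) p.1 p.2 != 0)) => [p Hp|H0].
    by exists p.1, p.2.
  exfalso.
  apply: (negP fB).
  apply/eqP/matrixP => k l.
  by move: (H0 (k, l)) => /= /negbFE /eqP ->; rewrite mxE.
pose Z := fun p : II => f (delta_mx p.1 p.2) k0 l0.
have fZ Y : f Y k0 l0 = phiZ Z Y.
  rewrite /f {1 2}[Y]mx_sum_delta_pair linear_sum -sumrB summxE.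
  apply: eq_bigr => p _; rewrite linearZ -scalerBr mxE mulrC.
  done.
have HA0 : \sum_i phiZ Z (A i) * (phiZ Z (A i))^* = 0.
  by rewrite big1 // => i _; rewrite -fZ fA mxE mul0r.
have HB0 : \sum_i phiZ Z (B i) * (phiZ Z (B i))^* = 0.
  by rewrite (choi_id _ HB) -(choi_id _ HA).
have : phiZ Z (B j) * (phiZ Z (B j))^* = 0.
  by apply: (psumr_eq0P _ HB0) => // i _; exact: mul_conjC_ge0.
by move/eqP; rewrite mul_conjC_eq0 -fZ (negbTE Hkl).
Qed.

End Uniq2.

Section Comb.
Variable R : realType.
Local Notation C := R[i].
Variable n : nat.
Local Notation MM := 'M[C]_n.+1.

Lemma krausF_comp (L L' : MM -> MM) (I J : finType) (F : I -> MM) (F' : J -> MM) :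
  krausF L F -> krausF L' F' ->
  krausF (fun X => L (L' X)) (fun p : I * J => F p.1 *m F' p.2).
Proof.
move=> HL HL' X; rewrite HL -(pair_bigA _ (fun i j => F i *m F' j *m X *m (F i *m F' j)^t*)) /=.
apply: eq_bigr => i _; rewrite HL' mulmx_sumr mulmx_suml; apply: eq_bigr => j _.
by rewrite adjM !mulmxA.
Qed.

Definition sumfam (I J : finType) (F : I -> MM) (F' : J -> MM) (s : (I + J)%type) : MM :=
  match s with inl i => F i | inr j => F' j end.

Lemma krausF_add (L L' : MM -> MM) (I J : finType) (F : I -> MM) (F' : J -> MM) :
  krausF L F -> krausF L' F' ->
  krausF (fun X => L X + L' X) (sumfam F F').
Proof. by move=> HL HL' X; rewrite HL HL' big_sumType. Qed.

Lemma krausF_scale (L : MM -> MM) (I : finType) (F : I -> MM) (c : C) :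
  0 <= c -> krausF L F -> krausF (fun X => c *: L X) (fun i => sqrtC c *: F i).
Proof.
move=> c0 HL X; rewrite HL scaler_sumr; apply: eq_bigr => i _.
rewrite adjZ -scalemxAl -scalemxAr -scalemxAl scalerA.
have sr : (sqrtC c)^* = sqrtC c by apply/CrealP; rewrite realE sqrtC_ge0 c0.
by rewrite sr -expr2 sqrtCK.
Qed.

Lemma krausF_id : krausF (fun X : MM => X) (fun _ : 'I_1 => 1%:M).
Proof.
move=> X; rewrite big_ord1 mul1mx.
have -> : (1%:M : MM)^t* = 1%:M by rewrite trmx1 map_mx1.
by rewrite mulmx1.
Qed.

Lemma krausF_ext (L L' : MM -> MM) (I : finType) (F : I -> MM) :
  (forall X, L X = L' X) -> krausF L F -> krausF L' F.
Proof. by move=> E HL X; rewrite -E HL. Qed.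

Definition adjin (I J : finType) (F : I -> MM) (D : J -> MM) :=
  forall i, inspan D ((F i)^t*).

Lemma adjin_comp (I J I' J' : finType) (F : I -> MM) (D : J -> MM)
  (F' : I' -> MM) (D' : J' -> MM) :
  adjin F D -> adjin F' D' ->
  adjin (fun p : I * I' => F p.1 *m F' p.2) (fun p : J' * J => D' p.1 *m D p.2).
Proof. by move=> H H' [i i'] /=; rewrite adjM; exact: inspan_mul. Qed.

Lemma adjin_add (I J I' J' : finType) (F : I -> MM) (D : J -> MM)
  (F' : I' -> MM) (D' : J' -> MM) :
  adjin F D -> adjin F' D' -> adjin (sumfam F F') (sumfam D D').
Proof.
move=> H H' [i|i] /=.
  by apply: inspan_trans (H i) => j; exact: (inspan_mem (sumfam D D') (inl j)).
by apply: inspan_trans (H' i) => j; exact: (inspan_mem (sumfam D D') (inr j)).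
Qed.

Lemma adjin_scale (I J : finType) (F : I -> MM) (D : J -> MM) (a b : C) :
  b != 0 -> adjin F D -> adjin (fun i => a *: F i) (fun j => b *: D j).
Proof.
move=> b0 H i; rewrite adjZ; apply: inspanZ; apply: inspan_trans (H i) => j.
have -> : D j = b^-1 *: (b *: D j) by rewrite scalerA mulVf // scale1r.
by apply: inspanZ; exact: (inspan_mem (fun j => b *: D j)).
Qed.

Lemma adjin_id : adjin (fun _ : 'I_1 => (1%:M : MM)) (fun _ : 'I_1 => 1%:M).
Proof.
move=> i; have -> : (1%:M : MM)^t* = 1%:M by rewrite trmx1 map_mx1.
exact: (inspan_mem (fun _ : 'I_1 => (1%:M : MM)) ord0).
Qed.

Lemma adj_prod m (G : 'I_m -> MM) :
  (\prod_(i < m) G i)^t* = \prod_(i < m) (G (rev_ord i))^t*.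
Proof.
elim: m G => [|m IH] G.
  by rewrite !big_ord0 trmx1 map_mx1.
rewrite big_ord_recl big_ord_recr /= -mulmxE adjM IH mulmxE; congr (_ * _).
  apply: eq_bigr => i _; congr (_ ^t*); congr G; apply: val_inj => /=.
  by rewrite subSS /bump leq0n add1n subnSK.
by congr (_ ^t*); congr G; apply: val_inj => /=; rewrite subnn.
Qed.

Lemma primitive_transfer (L Ld : MM -> MM) (I J : finType) (F : I -> MM) (D : J -> MM) :
  krausF L F -> krausF Ld D -> adjin F D -> primitive_cp L -> primitive_cp Ld.
Proof.
move=> HF HD HFD [p [W [HW [m [Hm Hfull]]]]].
pose D' := fun i : 'I_#|J| => D (enum_val i).
have HD' : krausF Ld D'.
  move=> X; rewrite HD (reindex (@enum_val J predT)) //.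
  by exists (@enum_rank J) => x _; [rewrite enum_valK | rewrite enum_rankK].
have DD' j : inspan D' (D j).
  by rewrite -[j]enum_rankK; exact: (inspan_mem D').
have WD' i : inspan D' ((W i)^t*).
  have := kraus_unique HF HW i => /inspan_adj H.
  apply: inspan_trans H => i'; apply: inspan_trans (HFD i') => j; exact: DD'.
exists #|J|, D'; split => //; exists m; split => // Y.
have [c Hc] := Hfull (Y ^t*).
have -> : Y = \sum_s (c s)^* *: (\prod_(i < m) W (s i))^t*.
  by rewrite -[Y]adjK Hc adj_sum; apply: eq_bigr => s _; rewrite adjZ.
have : inspan (prodfam D' (m:=m))
   (\sum_s (c s)^* *: (\prod_(i < m) W (s i))^t*).
  apply: inspan_sum => s; apply: inspanZ; rewrite adj_prod.
  by apply: inspan_prod => i; exact: WD'.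
by [].
Qed.

End Comb.

Section SR.
Variable R : realType.
Local Notation C := R[i].
Variable n : nat.
Local Notation MM := 'M[C]_n.+1.
Local Notation N := (n.+1 * n.+1)%N.

Lemma kraus_lin (L : MM -> MM) (I : finType) (W : I -> MM) :
  krausF L W -> forall a X Y, L (a *: X + Y) = a *: L X + L Y.
Proof.
move=> HL a X Y; rewrite !HL scaler_sumr -big_split /=; apply: eq_bigr => i _.
by rewrite mulmxDr mulmxDl -scalemxAr -scalemxAl.
Qed.

Lemma kraus_0 (L : MM -> MM) (I : finType) (W : I -> MM) : krausF L W -> L 0 = 0.
Proof. by move=> HL; rewrite HL big1 // => i _; rewrite mulmx0 mul0mx. Qed.

Lemma iter_0 (L : MM -> MM) (I : finType) (W : I -> MM) :
  krausF L W -> forall j, iter j L 0 = 0.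
Proof. by move=> HL; elim=> //= j ->; exact: kraus_0 HL. Qed.

Definition fvec (L : MM -> MM) (v : 'rV[C]_N) : 'rV[C]_N := mxvec (L (vec_mx v)).

Lemma lin1_mulE d (f : 'rV[C]_d -> 'rV[C]_d) :
  (forall a u v, f (a *: u + v) = a *: f u + f v) -> forall u, u *m lin1_mx f = f u.
Proof.
move=> lin.
have f0 : f 0 = 0.
  have H := lin 1 0 0; rewrite scaler0 addr0 scale1r in H.
  by apply/(addrI (f 0)); rewrite addr0 -H.
have fD x y : f (x + y) = f x + f y by have := lin 1 x y; rewrite !scale1r.
have fZ a x : f (a *: x) = a *: f x by have := lin a x 0; rewrite !addr0 f0 addr0.
move=> u.
have Hu : u = \sum_(j < d) u 0 j *: delta_mx 0 j.
  by rewrite {1}[u]matrix_sum_delta big_ord1.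
rewrite [in RHS]Hu.
rewrite (big_morph f fD f0).
apply/rowP => i; rewrite !mxE summxE; apply: eq_bigr => j _.
by rewrite fZ !mxE.
Qed.

Lemma fvec_lin (L : MM -> MM) (I : finType) (W : I -> MM) : krausF L W ->
  forall a u v, fvec L (a *: u + v) = a *: fvec L u + fvec L v.
Proof. by move=> HL a u v; rewrite /fvec !linearP /= (kraus_lin HL) linearP. Qed.

Lemma iter_A (L : MM -> MM) (I : finType) (W : I -> MM) : krausF L W ->
  forall j u, u *m (lin1_mx (fvec L)) ^+ j = mxvec (iter j L (vec_mx u)).
Proof.
move=> HL; elim=> [|j IH] u; first by rewrite expr0 mulmx1 vec_mxK.
rewrite exprSr -mulmxE mulmxA IH (lin1_mulE (fvec_lin HL)) /fvec mxvecK.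
done.
Qed.

Lemma eig_or_nil d (A : 'M[C]_d) :
  (exists2 z, z != 0 & eigenvalue A z) \/ A ^+ d = 0.
Proof.
case: d A => [|d] A; first by right; apply/matrixP => [[]].
have [r Hr] := closed_field_poly_normal (char_poly A).
rewrite (monicP (char_poly_monic A)) scale1r in Hr.
case: (boolP (has (fun z => z != 0) r)) => [/hasP [z zr z0] | /hasPn Hall].
  by left; exists z => //; rewrite eigenvalue_root_char Hr root_prod_XsubC.
right.
have E : \prod_(z <- r) ('X - z%:P) = 'X ^+ size r.
  rewrite (eq_big_seq (fun _ => 'X)) => [|z zr]; last first.
    by have := Hall z zr; rewrite negbK => /eqP ->; rewrite subr0.
  by rewrite big_const_seq count_predT; elim: (size r) => //= k ->; rewrite exprS.
have Hs : size r = d.+1.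
  by have := size_char_poly A; rewrite Hr E size_polyXn => -[].
have := Cayley_Hamilton A; rewrite Hr E Hs rmorphXn /= horner_mx_X.
done.
Qed.

End SR.

Section SR2.
Variable R : realType.
Local Notation C := R[i].
Variable n : nat.
Local Notation MM := 'M[C]_n.+1.
Local Notation N := (n.+1 * n.+1)%N.

Lemma iter_kraus (L : MM -> MM) p (W : 'I_p -> MM) : krausF L W ->
  forall j, exists (J : finType) (G : J -> MM), krausF (iter j L) G /\
    forall s : {ffun 'I_j -> 'I_p}, inspan G (\prod_(i < j) W (s i)).
Proof.
move=> HL; elim=> [|j [J [G [HG Hs]]]].
  exists 'I_1, (fun _ => 1%:M); split; first exact: krausF_id.
  by move=> s; rewrite big_ord0; exact: (inspan_mem (fun _ : 'I_1 => (1%:M : MM)) ord0).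
exists ('I_p * J)%type, (fun q => W q.1 *m G q.2); split.
  by apply: krausF_ext (krausF_comp HL HG) => X.
move=> s; rewrite big_ord_recl -mulmxE.
apply: inspan_mul; first exact: inspan_mem.
have := Hs [ffun i => s (lift ord0 i)].
by under eq_bigr do rewrite ffunE.
Qed.

Lemma full_iter (T : MM -> MM) (I : finType) (G : I -> MM) :
  krausF T G -> fullF G -> forall k, exists (J : finType) (H : J -> MM),
    krausF (iter k.+1 T) H /\ fullF H.
Proof.
move=> HT HG; elim=> [|k [J [H [HH HfH]]]].
  by exists I, G; split => //; apply: krausF_ext HT.
exists (I * J)%type, (fun q => G q.1 *m H q.2); split.
  by apply: krausF_ext (krausF_comp HT HH) => X.
move=> X; rewrite -[X]mul1mx; apply: inspan_mul; [exact: HG | exact: HfH].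
Qed.

Lemma full_nonzero (L : MM -> MM) (J : finType) (H : J -> MM) :
  krausF L H -> fullF H -> ~ (forall X, L X = 0).
Proof.
move=> HL HF H0.
have HE : krausF L (fun i : 'I_0 => (0 : MM)) by move=> X; rewrite H0 big_ord0.
have Hz j : H j = 0 by have [c ->] := kraus_unique HE HL j; rewrite big_ord0.
have [c Hc] := HF 1%:M.
move: Hc; rewrite big1 => [|j _]; last by rewrite Hz scaler0.
by move/matrixP/(_ ord0 ord0); rewrite !mxE /= => /eqP; rewrite oner_eq0.
Qed.

Lemma iter_mulE (L : MM -> MM) m k X : iter (m * k) L X = iter k (iter m L) X.
Proof.
elim: k X => [|k IH] X; first by rewrite muln0.
by rewrite mulnS iterD IH.
Qed.

Lemma normC_def (z : C) : `|z| = ((Normc.normc z)%:C)%C.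
Proof. by []. Qed.

Lemma eig_bound d (A : 'M[C]_d) (v : 'rV[C]_d) z :
  v != 0 -> v *m A = z *: v ->
  Normc.normc z <= \sum_i \sum_j Normc.normc (A i j).
Proof.
move=> v0 Hv.
have [i0 Hi0] : exists i0, v 0 i0 != 0.
  case: (pickP (fun i => v 0 i != 0)) => [i Hi|H0]; first by exists i.
  exfalso; apply: (negP v0); apply/eqP/rowP => i; rewrite mxE.
  by move: (H0 i) => /negbFE /eqP.
case: (@Order.TotalTheory.arg_maxP _ _ 'I_d i0 xpredT (fun i => Normc.normc (v 0 i)) isT).
move=> im _ Him.
have Hle j : `|v 0 j| <= `|v 0 im|.
  by rewrite !normC_def lecR; exact: (Him j isT).
have vpos : 0 < `|v 0 im|.
  rewrite normr_gt0; apply/eqP => E.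
  have := Hle i0; rewrite E normr0 normr_le0 => /eqP H; by rewrite H eqxx in Hi0.
have key : `|z| * `|v 0 im| <= `|v 0 im| * \sum_i \sum_j `|A i j|.
  rewrite -normrM.
  have -> : z * v 0 im = \sum_j v 0 j * A j im.
    by have := congr1 (fun w : 'rV[C]_d => w 0 im) Hv; rewrite !mxE => <-.
  apply: (le_trans (ler_norm_sum _ _ _)).
  apply: (@le_trans _ _ (\sum_j `|v 0 im| * `|A j im|)).
    by apply: ler_sum => j _; rewrite normrM; apply: ler_wpM2r => //; exact: Hle.
  rewrite -mulr_sumr; apply: ler_wpM2l => //.
  apply: ler_sum => i _; rewrite (bigD1 im) //= lerDl.
  by apply: sumr_ge0 => j _; exact: normr_ge0.
rewrite [X in _ <= X]mulrC ler_pM2r // in key.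
have E : \sum_i \sum_j `|A i j| = ((\sum_i \sum_j Normc.normc (A i j))%:C)%C.
  rewrite rmorph_sum; apply: eq_bigr => i _; rewrite rmorph_sum.
  by apply: eq_bigr => j _.
by rewrite E normC_def lecR in key.
Qed.

End SR2.

Section SR3.
Variable R : realType.
Local Notation C := R[i].
Variable n : nat.
Local Notation MM := 'M[C]_n.+1.
Local Notation N := (n.+1 * n.+1)%N.

Lemma prim_srad (L : MM -> MM) : primitive_cp L -> 0 < spectral_radius L.
Proof.
move=> [p [W [HW [m [Hm Hfull]]]]].
have HL : krausF L W := HW.
pose A := lin1_mx (fvec L).
have fvA u : u *m A = fvec L u by rewrite (lin1_mulE (fvec_lin HL)).
have [z z0 Hz] : exists2 z, z != 0 & eigenvalue A z.
  case: (eig_or_nil A) => // HA; exfalso.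
  have [J [G [HG Hs]]] := iter_kraus HL m.
  have fG : fullF G := fun X => inspan_trans (fun s => Hs s) (Hfull X).
  have [J' [H [HH fH]]] := full_iter HG fG (N.-1).
  apply: (full_nonzero HH fH) => X.
  rewrite -iter_mulE prednK ?muln_gt0 //.
  have HN : iter N L X = 0.
    have := iter_A HL N (mxvec X); rewrite HA mulmx0 mxvecK => /esym H0.
    by apply: (can_inj mxvecK); rewrite H0 linear0.
  have -> : (m * N = (m * N - N) + N)%N by rewrite subnK // leq_pmull.
  by rewrite iterD HN (iter_0 HL).
have [v Hv v0] := eigenvalueP Hz.
pose B := \sum_i \sum_j Normc.normc (A i j).
have Hub r : (exists z, Defs.eigenvalue_map L z /\ r = Normc.normc z) -> r <= B.
  move=> [z' [[Y [Y0 HY]] ->]].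
  apply: (@eig_bound _ _ A (mxvec Y)).
    by apply: contra Y0 => /eqP H; rewrite -[Y]mxvecK H linear0.
  by rewrite fvA /fvec mxvecK HY linearZ.
have Ez : Defs.eigenvalue_map L z.
  exists (vec_mx v); split.
    by apply: contra v0 => /eqP H; rewrite -[v]vec_mxK H linear0.
  have : fvec L v = z *: v by rewrite -fvA.
  by move/(congr1 vec_mx); rewrite /fvec mxvecK linearZ.
have Hsup : has_sup (fun r => exists z, Defs.eigenvalue_map L z /\ r = Normc.normc z).
  split; first by exists (Normc.normc z), z.
  by exists B => r Hr; exact: Hub.
apply: (lt_le_trans _ (sup_upper_bound Hsup (x := Normc.normc z) _)); last first.
  by exists z.
rewrite lt_neqAle; apply/andP; split.
  by apply: contra z0 => /eqP H; apply/eqP; apply: Normc.eq0_normc.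
by rewrite -lecR -normC_def normr_ge0.
Qed.

End SR3.

Section Tens.
Variable R : realType.
Local Notation C := R[i].
Variables n k : nat.
Local Notation MM := 'M[C]_n.+1.
Local Notation BB := 'M[C]_(n.+1 * k.+1).
Local Notation idx := (@mxtens.mxtens_index n.+1 k.+1).

Lemma sum_tens (F : 'I_(n.+1 * k.+1) -> C) :
  \sum_P F P = \sum_x \sum_a F (idx (x, a)).
Proof.
rewrite (reindex idx) /=; last first.
  by exists (@mxtens.mxtens_unindex n.+1 k.+1) => ? _; [apply: mxtens.mxtens_indexK | apply: mxtens.mxtens_unindexK].
by rewrite pair_bigA /=; apply: eq_bigr => -[x a].
Qed.

Lemma kronE (A : MM) (B : 'M[C]_k.+1) i l x a :
  (kron A B) (idx (i, l)) (idx (x, a)) = A i x * B l a.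
Proof. exact: mxtens.tensmxE. Qed.

Lemma kron1_mulE (B : 'M[C]_k.+1) (Z : BB) i l Qd :
  (kron 1%:M B *m Z) (idx (i, l)) Qd = \sum_l' B l l' * Z (idx (i, l')) Qd.
Proof.
rewrite mxE sum_tens (bigD1 i) //= [X in _ + X]big1 ?addr0; last first.
  move=> x Hx; rewrite big1 // => a _.
  by rewrite kronE mxE eq_sym (negbTE Hx) mul0r mul0r.
by apply: eq_bigr => l' _; rewrite kronE mxE eqxx mul1r.
Qed.

Lemma mul_kron1E (Z : BB) (B : 'M[C]_k.+1) Pd j l :
  (Z *m kron 1%:M B) Pd (idx (j, l)) = \sum_l' Z Pd (idx (j, l')) * B l' l.
Proof.
rewrite mxE sum_tens (bigD1 j) //= [X in _ + X]big1 ?addr0; last first.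
  move=> x Hx; rewrite big1 // => a _.
  by rewrite kronE mxE (negbTE Hx) mul0r mulr0.
by apply: eq_bigr => l' _; rewrite kronE mxE eqxx mul1r.
Qed.

Lemma mul_kronDE (Y : BB) (X : MM) (d : 'rV[C]_k.+1) Pd y b :
  (Y *m kron X (diag_mx d)) Pd (idx (y, b)) = d 0 b * \sum_x Y Pd (idx (x, b)) * X x y.
Proof.
rewrite mxE sum_tens mulr_sumr; apply: eq_bigr => x _.
rewrite (bigD1 b) //= big1 ?addr0; last first.
  by move=> a Ha; rewrite kronE mxE (negbTE Ha) mulr0n mulr0 mulr0.
by rewrite kronE !mxE eqxx mulr1n mulrA mulrC.
Qed.

Definition blk (Y : BB) (l a : 'I_k.+1) : MM :=
  \matrix_(i, x) Y (idx (i, l)) (idx (x, a)).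

Lemma ptrace_formula (Y1 Y2 : BB) (X : MM) (d : 'rV[C]_k.+1) :
  ptrace2 (Y1 *m kron X (diag_mx d) *m Y2) =
  \sum_l \sum_a d 0 a *: (blk Y1 l a *m X *m blk Y2 a l).
Proof.
apply/matrixP => i j; rewrite [LHS]mxE summxE; apply: eq_bigr => l _.
rewrite summxE [LHS]mxE sum_tens exchange_big /=; apply: eq_bigr => a _.
rewrite [RHS]mxE [X in _ = _ * X]mxE mulr_sumr; apply: eq_bigr => y _.
rewrite mul_kronDE -mulrA; congr (_ * _).
rewrite !mxE !mulr_suml; apply: eq_bigr => x _.
by rewrite !mxE.
Qed.

End Tens.

Section Tens2.
Variable R : realType.
Local Notation C := R[i].
Variables n k : nat.
Local Notation MM := 'M[C]_n.+1.
Local Notation KK := 'M[C]_k.+1.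
Local Notation BB := 'M[C]_(n.+1 * k.+1).
Local Notation idx := (@mxtens.mxtens_index n.+1 k.+1).

Lemma kron_mul (A A' : MM) (B B' : KK) : kron A B *m kron A' B' = kron (A *m A') (B *m B').
Proof. exact: mxtens.tensmx_mul. Qed.

Lemma kron_adj (A : MM) (B : KK) : (kron A B)^t* = kron (A ^t*) (B ^t*).
Proof.
apply/matrixP => P Q.
case: (mxtens.mxtens_indexP P) => i l; case: (mxtens.mxtens_indexP Q) => j a.
by rewrite mxE mxE kronE kronE !mxE rmorphM.
Qed.

Lemma kron11 : kron (1%:M : MM) (1%:M : KK) = 1%:M.
Proof.
apply/matrixP => P Q.
case: (mxtens.mxtens_indexP P) => i l; case: (mxtens.mxtens_indexP Q) => j a.
rewrite kronE !mxE -natrM mulnb.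
have -> : (idx (i, l) == idx (j, a)) = ((i, l) == (j, a)).
  by apply/eqP/eqP => [/(can_inj (@mxtens.mxtens_indexK _ _))|->].
done.
Qed.

Lemma ptrace_cyc (B : KK) (Z : BB) :
  ptrace2 (kron 1%:M B *m Z) = ptrace2 (Z *m kron 1%:M B).
Proof.
apply/matrixP => i j; rewrite !mxE.
under [LHS]eq_bigr do rewrite kron1_mulE.
under [RHS]eq_bigr do rewrite mul_kron1E.
rewrite exchange_big; apply: eq_bigr => l _; apply: eq_bigr => l' _.
by rewrite mulrC.
Qed.

Lemma blk_kron1 (A B : KK) (Z : BB) l a :
  blk (kron 1%:M A *m Z *m kron 1%:M B) l a =
  \sum_l' \sum_a' (A l l' * B a' a) *: blk Z l' a'.
Proof.
apply/matrixP => i x; rewrite mxE mul_kron1E summxE.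
rewrite [LHS](eq_bigr (fun l' => \sum_l'' A l l'' * Z (idx (i, l'')) (idx (x, l')) * B l' a)); last first.
  by move=> l' _; rewrite kron1_mulE mulr_suml.
rewrite exchange_big; apply: eq_bigr => l' _; rewrite summxE.
apply: eq_bigr => a' _; rewrite !mxE.
by rewrite mulrAC mulrC mulrA.
Qed.

Lemma blk_diag (e : 'rV[C]_k.+1) (Z : BB) l a :
  blk (kron 1%:M (diag_mx e) *m Z) l a = e 0 l *: blk Z l a.
Proof.
apply/matrixP => i x; rewrite [LHS]mxE kron1_mulE (bigD1 l) //= big1 ?addr0.
  by rewrite !mxE eqxx mulr1n.
by move=> l' Hl; rewrite !mxE eq_sym (negbTE Hl) mulr0n mul0r.
Qed.

Lemma blk_adj (Z : BB) l a : blk (Z ^t*) a l = (blk Z l a)^t*.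
Proof. by apply/matrixP => i x; rewrite !mxE. Qed.

End Tens2.

Section Spec.
Variable R : realType.
Local Notation C := R[i].
Variable k : nat.
Local Notation KK := 'M[C]_k.+1.

Lemma hfunE (f : R -> C) (A : KK) :
  hfun f A = (spectralmx A)^t* *m
    diag_mx (map_mx (fun z : C => f (complex.Re z)) (spectral_diag A)) *m spectralmx A.
Proof. by rewrite /hfun invmx_unitary // spectral_unitarymx. Qed.

Lemma unitary_l (P : KK) : P \is unitarymx -> P^t* *m P = 1%:M.
Proof. by move/unitarymxP => H; apply: mulmx1C. Qed.

Lemma unitary_r (P : KK) : P \is unitarymx -> P *m P^t* = 1%:M.
Proof. by move/unitarymxP. Qed.

Lemma gibbs_decomp b (H : KK) : exists (P : KK) (g : 'rV[C]_k.+1),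
  [/\ P \is unitarymx, (forall a, 0 < g 0 a) & gibbs b H = P^t* *m diag_mx g *m P].
Proof.
set P := spectralmx H.
set gv := map_mx (fun z : C => rfun (fun x => expR (- (b * x))) (complex.Re z)) (spectral_diag H).
have PU : P \is unitarymx by exact: spectral_unitarymx.
have gpos a : 0 < gv 0 a.
  by rewrite mxE /rfun ltcE /= eqxx expR_gt0.
have E : hfun (rfun (fun x => expR (- (b * x)))) H = P^t* *m diag_mx gv *m P by rewrite hfunE.
have trE : \tr (hfun (rfun (fun x => expR (- (b * x)))) H) = \sum_a gv 0 a.
  by rewrite E mxtrace_mulC mulmxA unitary_r // mul1mx mxtrace_diag.
have trpos : 0 < \sum_a gv 0 a.
  rewrite (bigD1 ord0) //=; apply: ltr_wpDr => //.
  by apply: sumr_ge0 => a _; exact: ltW.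
exists P, ((\sum_a gv 0 a)^-1 *: gv); split => //.
  by move=> a; rewrite mxE; apply: mulr_gt0 => //; rewrite invr_gt0.
by rewrite /gibbs /= trE E linearZ /= scalemxAl scalemxAr.
Qed.

Lemma gibbs_spec (P : KK) (g : 'rV[C]_k.+1) :
  P \is unitarymx -> (forall a, 0 < g 0 a) ->
  let G := P^t* *m diag_mx g *m P in
  G = (spectralmx G)^t* *m diag_mx (spectral_diag G) *m spectralmx G /\
  forall l, 0 < complex.Re (spectral_diag G 0 l).
Proof.
move=> PU gpos G.
set Q := spectralmx G; set q := spectral_diag G.
have QU : Q \is unitarymx by exact: spectral_unitarymx.
have GN : G \is normalmx.
  by apply/orthomx_spectral_subproof; exists (P, g) => //=; rewrite invmx_unitary.
have GE : G = Q^t* *m diag_mx q *m Q.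
  by rewrite -invmx_unitary //; apply/orthomx_spectralP.
split => // l.
pose w := row l Q.
have Hw : w *m G = q 0 l *: w.
  have : Q *m G = diag_mx q *m Q.
    by rewrite {1}GE !mulmxA unitary_r // mul1mx.
  move/(congr1 (row l)); rewrite !row_mul => ->.
  by apply/rowP => x; rewrite !mxE (bigD1 l) //= big1 ?addr0;
    [rewrite !mxE eqxx mulr1n | move=> y Hy; rewrite !mxE eq_sym (negbTE Hy) mulr0n mul0r].
pose u := w *m P^t*.
have Hu : u *m diag_mx g = q 0 l *: u.
  have : w *m G *m P^t* = q 0 l *: w *m P^t* by rewrite Hw.
  by rewrite /G !mulmxA -[w *m _ *m _ *m _ *m _]mulmxA unitary_r // mulmx1 -scalemxAl.
have u0 : u != 0.
  apply/eqP => u0.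
  have : u *m P = w by rewrite -mulmxA unitary_l // mulmx1.
  rewrite u0 mul0mx => /esym w0.
  have : row l (Q *m Q^t*) = 0 by rewrite row_mul -/w w0 mul0mx.
  rewrite unitary_r // => /rowP/(_ l); rewrite !mxE eqxx /= => /eqP.
  by rewrite oner_eq0.
have [x ux] : exists x, u 0 x != 0.
  case: (pickP (fun x => u 0 x != 0)) => [x Hx|H0]; first by exists x.
  exfalso; apply: (negP u0); apply/eqP/rowP => x.
  by move: (H0 x) => /= /negbFE /eqP ->; rewrite mxE.
have : u 0 x * g 0 x = q 0 l * u 0 x.
  by have := congr1 (fun v : 'rV[C]_k.+1 => v 0 x) Hu; rewrite /= mul_mx_diag !mxE.
rewrite mulrC => /(mulIf ux) qg.
by have := gpos x; rewrite qg ltcE /= => /andP[].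
Qed.

End Spec.

Section PerJ.
Variable R : realType.
Local Notation C := R[i].
Variables n k : nat.
Local Notation MM := 'M[C]_n.+1.
Local Notation KK := 'M[C]_k.+1.
Local Notation BB := 'M[C]_(n.+1 * k.+1).
Local Notation I1 := (1%:M : MM).

Lemma adjMg m p q (A : 'M[C]_(m,p)) (B : 'M[C]_(p,q)) : (A *m B)^t* = B^t* *m A^t*.
Proof. by rewrite trmx_mul map_mxM. Qed.
Lemma adjKg m p (A : 'M[C]_(m,p)) : A^t*^t* = A.
Proof. exact: trmxCK. Qed.
Lemma adj1g m : (1%:M : 'M[C]_m)^t* = 1%:M.
Proof. by rewrite trmx1 map_mx1. Qed.
Lemma adj_kron1 (A : KK) : (kron I1 A)^t* = kron I1 (A^t*).
Proof. by rewrite kron_adj adj1g. Qed.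

Lemma sq_sandwich (c : C) (B X : MM) : 0 <= c ->
  (sqrtC c *: B) *m X *m (sqrtC c *: B)^t* = c *: (B *m X *m B^t*).
Proof.
move=> c0; rewrite adjZ -scalemxAl -scalemxAr -scalemxAl scalerA.
have sr : (sqrtC c)^* = sqrtC c by apply/CrealP; rewrite realE sqrtC_ge0 c0.
by rewrite sr -expr2 sqrtCK.
Qed.

Lemma nondual_kraus (U : BB) (P : KK) (g : 'rV[C]_k.+1) :
  (forall a, 0 <= g 0 a) ->
  krausF (fun X => ptrace2 (U *m kron X (P^t* *m diag_mx g *m P) *m U^t*))
    (fun p : 'I_k.+1 * 'I_k.+1 => sqrtC (g 0 p.2) *: blk (U *m kron I1 (P^t*)) p.1 p.2).
Proof.
move=> gpos X.
have -> : kron X (P^t* *m diag_mx g *m P) =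
    kron I1 (P^t*) *m kron X (diag_mx g) *m kron I1 P.
  by rewrite !kron_mul mul1mx mulmx1.
have -> : U *m (kron I1 (P^t*) *m kron X (diag_mx g) *m kron I1 P) *m U^t* =
    (U *m kron I1 (P^t*)) *m kron X (diag_mx g) *m (U *m kron I1 (P^t*))^t*.
  by rewrite adjMg adj_kron1 adjKg !mulmxA.
rewrite ptrace_formula -(pair_bigA _ (fun l a =>
  (sqrtC (g 0 a) *: blk (U *m kron I1 (P^t*)) l a) *m X *m
  (sqrtC (g 0 a) *: blk (U *m kron I1 (P^t*)) l a)^t*)).
apply: eq_bigr => l _; apply: eq_bigr => a _.
by rewrite sq_sandwich // blk_adj.
Qed.

Lemma dual_kraus (U : BB) (Q : KK) (e d : 'rV[C]_k.+1) :
  (forall l, 0 <= e 0 l) -> (forall a, 0 <= d 0 a) ->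
  krausF (fun X => ptrace2 (kron I1 (Q^t* *m diag_mx e *m Q) *m U^t* *m
                            kron X (Q^t* *m diag_mx d *m Q) *m U))
    (fun p : 'I_k.+1 * 'I_k.+1 => sqrtC (e 0 p.1 * d 0 p.2) *:
        blk (kron I1 Q *m U^t* *m kron I1 (Q^t*)) p.1 p.2).
Proof.
move=> epos dpos X.
set Y1 := kron I1 Q *m U^t* *m kron I1 (Q^t*).
have -> : kron I1 (Q^t* *m diag_mx e *m Q) =
    kron I1 (Q^t*) *m kron I1 (diag_mx e) *m kron I1 Q.
  by rewrite !kron_mul !mul1mx.
have -> : kron X (Q^t* *m diag_mx d *m Q) =
    kron I1 (Q^t*) *m kron X (diag_mx d) *m kron I1 Q.
  by rewrite !kron_mul mul1mx mulmx1.
have -> : kron I1 (Q^t*) *m kron I1 (diag_mx e) *m kron I1 Q *m U^t* *m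
    (kron I1 (Q^t*) *m kron X (diag_mx d) *m kron I1 Q) *m U =
    kron I1 (Q^t*) *m ((kron I1 (diag_mx e) *m Y1) *m kron X (diag_mx d) *m (kron I1 Q *m U)).
  by rewrite /Y1 !mulmxA.
rewrite ptrace_cyc.
have -> : (kron I1 (diag_mx e) *m Y1) *m kron X (diag_mx d) *m (kron I1 Q *m U) *m kron I1 (Q^t*)
   = (kron I1 (diag_mx e) *m Y1) *m kron X (diag_mx d) *m Y1^t*.
  by rewrite /Y1 !adjMg !adj_kron1 !adjKg !mulmxA.
rewrite ptrace_formula -(pair_bigA _ (fun l a =>
  (sqrtC (e 0 l * d 0 a) *: blk Y1 l a) *m X *m (sqrtC (e 0 l * d 0 a) *: blk Y1 l a)^t*)).
apply: eq_bigr => l _; apply: eq_bigr => a _.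
rewrite sq_sandwich ?mulr_ge0 // blk_diag blk_adj -!scalemxAl scalerA.
by rewrite mulrC.
Qed.

End PerJ.

Section PerJ2.
Variable R : realType.
Local Notation C := R[i].
Variables n k : nat.
Local Notation MM := 'M[C]_n.+1.
Local Notation KK := 'M[C]_k.+1.
Local Notation BB := 'M[C]_(n.+1 * k.+1).
Local Notation I1 := (1%:M : MM).

Lemma LjE (HS : MM) (HE : KK) (V : BB) (tau b0 : R) X :
  Lj HS HE V tau b0 X = ptrace2 (Ugen HS HE V tau *m kron X (gibbs b0 HE) *m (Ugen HS HE V tau)^t*).
Proof. by []. Qed.

Lemma LjdualE (HS : MM) (HE : KK) (V : BB) (tau b a : R) X :
  Ljdual HS HE V tau b a X = ptrace2 (kron I1 (mxpowR (gibbs b HE) (1 - a)) *m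
     (Ugen HS HE V tau)^t* *m kron X (mxpowR (gibbs b HE) a) *m Ugen HS HE V tau).
Proof. by []. Qed.

Lemma adjin_generic (U : BB) (P Q : KK) (g e d : 'rV[C]_k.+1) :
  Q \is unitarymx -> (forall l, 0 < e 0 l) -> (forall a, 0 < d 0 a) ->
  adjin (fun p : 'I_k.+1 * 'I_k.+1 => sqrtC (g 0 p.2) *: blk (U *m kron I1 (P^t*)) p.1 p.2)
        (fun p : 'I_k.+1 * 'I_k.+1 => sqrtC (e 0 p.1 * d 0 p.2) *:
            blk (kron I1 Q *m U^t* *m kron I1 (Q^t*)) p.1 p.2).
Proof.
move=> QU epos dpos [l a] /=.
set Y1 := kron I1 Q *m U^t* *m kron I1 (Q^t*).
set D := (fun p : 'I_k.+1 * 'I_k.+1 => sqrtC (e 0 p.1 * d 0 p.2) *: blk Y1 p.1 p.2).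
rewrite adjZ -blk_adj; apply: inspanZ.
have -> : (U *m kron I1 (P^t*))^t* = kron I1 (P *m Q^t*) *m Y1 *m kron I1 Q.
  have H1 : kron I1 (P *m Q^t*) *m kron I1 Q = kron I1 P.
    by rewrite kron_mul mulmx1 -mulmxA unitary_l // mulmx1.
  have H2 : kron I1 (Q^t*) *m kron I1 Q = 1%:M.
    by rewrite kron_mul mulmx1 unitary_l // kron11.
  by rewrite adjMg adj_kron1 adjKg /Y1 !mulmxA H1 -mulmxA H2 mulmx1.
rewrite blk_kron1; apply: inspan_sum => l'; apply: inspan_sum => a'; apply: inspanZ.
have s0 : sqrtC (e 0 l' * d 0 a') != 0.
  by rewrite sqrtC_eq0 mulf_neq0 // gt_eqF.
have -> : blk Y1 l' a' = (sqrtC (e 0 l' * d 0 a'))^-1 *: D (l', a').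
  by rewrite /D /= scalerA mulVf // scale1r.
by apply: inspanZ; exact: inspan_mem.
Qed.

Lemma per_j (HS : MM) (HE : KK) (V : BB) (tau b0 b a : R) :
  exists (I J : finType) (F : I -> MM) (D : J -> MM),
   [/\ krausF (Lj HS HE V tau b0) F, krausF (Ljdual HS HE V tau b a) D & adjin F D].
Proof.
have [P [g [PU gpos GE]]] := gibbs_decomp b0 HE.
have [P' [g' [PU' gpos' GE']]] := gibbs_decomp b HE.
have [GQ qpos] := gibbs_spec PU' gpos'.
rewrite -GE' in GQ qpos.
set Q := spectralmx (gibbs b HE) in GQ qpos.
set q := spectral_diag (gibbs b HE) in GQ qpos.
pose pw s := map_mx (fun z : C => rfun (fun x => powR x s) (complex.Re z)) q.
have pwE s : mxpowR (gibbs b HE) s = Q^t* *m diag_mx (pw s) *m Q.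
  by rewrite /mxpowR hfunE.
have pwpos s l : 0 < pw s 0 l.
  by rewrite mxE /rfun ltcE /= eqxx powR_gt0.
set U := Ugen HS HE V tau.
exists ('I_k.+1 * 'I_k.+1)%type, ('I_k.+1 * 'I_k.+1)%type.
eexists; eexists; split.
- apply: krausF_ext (nondual_kraus U P (fun a => ltW (gpos a))) => X.
  by rewrite LjE -/U GE.
- apply: krausF_ext (dual_kraus U Q (fun l => ltW (pwpos (1 - a) l)) (fun l => ltW (pwpos a l))) => X.
  by rewrite LjdualE -/U !pwE.
- apply: adjin_generic; [exact: spectral_unitarymx | exact: pwpos | exact: pwpos].
Qed.

End PerJ2.

Section Final.
Variable R : realType.
Local Notation C := R[i].
Variables (n M : nat) (k : 'I_M -> nat).
Variables (HS : 'M[C]_n.+1) (HE : forall j, 'M[C]_((k j).+1))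
  (V : forall j, 'M[C]_(n.+1 * (k j).+1)) (tau : 'I_M -> R) (beta_ref : R).
Local Notation MM := 'M[C]_n.+1.

Lemma per_j' (zeta0 zeta alpha : 'I_M -> R) j :
  exists (I J : finType) (F : I -> MM) (D : J -> MM),
   [/\ krausF (Lmap HS HE V tau beta_ref j zeta0) F,
       krausF (Lmapdual HS HE V tau beta_ref j zeta alpha) D & adjin F D].
Proof. exact: per_j. Qed.

Lemma cy_fam (zeta0 zeta alpha : 'I_M -> R) (s : seq 'I_M) :
  exists (I J : finType) (F : I -> MM) (D : J -> MM),
   [/\ krausF (fun X => foldl (fun Y j => Lmap HS HE V tau beta_ref j zeta0 Y) X s) F,
       krausF (fun X => foldr (fun j Y => Lmapdual HS HE V tau beta_ref j zeta alpha Y) X s) D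
     & adjin F D].
Proof.
elim: s => [|j s [I [J [F [D [HF HD HFD]]]]]].
  by exists 'I_1, 'I_1, (fun _ => 1%:M), (fun _ => 1%:M); split;
    [exact: krausF_id | exact: krausF_id | exact: adjin_id].
have [I' [J' [F' [D' [HF' HD' HFD']]]]] := per_j' zeta0 zeta alpha j.
exists (I * I')%type, (J' * J)%type, (fun p => F p.1 *m F' p.2), (fun p => D' p.1 *m D p.2).
split.
- by apply: krausF_ext (krausF_comp HF HF') => X.
- by apply: krausF_ext (krausF_comp HD' HD) => X.
- exact: adjin_comp.
Qed.

Lemma ra_fam (zeta0 zeta alpha : 'I_M -> R) (s : seq 'I_M) :
  exists (I J : finType) (F : I -> MM) (D : J -> MM),
   [/\ krausF (fun X => \sum_(j <- s) Lmap HS HE V tau beta_ref j zeta0 X) F,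
       krausF (fun X => \sum_(j <- s) Lmapdual HS HE V tau beta_ref j zeta alpha X) D
     & adjin F D].
Proof.
elim: s => [|j s [I [J [F [D [HF HD HFD]]]]]].
  exists 'I_0, 'I_0, (fun _ => 0), (fun _ => 0); split => //.
  - by move=> X; rewrite !big_nil big_ord0.
  - by move=> X; rewrite !big_nil big_ord0.
  - by case.
have [I' [J' [F' [D' [HF' HD' HFD']]]]] := per_j' zeta0 zeta alpha j.
exists (I' + I)%type, (J' + J)%type, (sumfam F' F), (sumfam D' D).
split.
- by apply: krausF_ext (krausF_add HF' HF) => X; rewrite big_cons.
- by apply: krausF_ext (krausF_add HD' HD) => X; rewrite big_cons.
- exact: adjin_add.
Qed.

Lemma sharp_fam (sharp : protocol) (zeta0 zeta alpha : 'I_M -> R) : (0 < M)%N ->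
  exists (I J : finType) (F : I -> MM) (D : J -> MM),
   [/\ krausF (Lsharp HS HE V tau beta_ref sharp zeta0) F,
       krausF (Lsharpdual HS HE V tau beta_ref sharp zeta alpha) D
     & adjin F D].
Proof.
move=> M0; case: sharp.
  by have := cy_fam zeta0 zeta alpha (enum 'I_M).
have [I [J [F [D [HF HD HFD]]]]] := ra_fam zeta0 zeta alpha (index_enum 'I_M).
have c0 : (0 : C) <= (M%:R)^-1 by rewrite invr_ge0 ler0n.
have c1 : sqrtC ((M%:R : C)^-1) != 0.
  by rewrite sqrtC_eq0 invr_eq0 pnatr_eq0 -lt0n.
exists I, J, (fun i => sqrtC ((M%:R : C)^-1) *: F i), (fun i => sqrtC ((M%:R : C)^-1) *: D i).
split.
- exact: krausF_scale.
- exact: krausF_scale.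
- exact: adjin_scale.
Qed.

End Final.

Unset Implicit Arguments.

Theorem mainTheorem17 (R : realType) (n M : nat) (k : 'I_M -> nat)
  (HS : 'M[R[i]]_n.+1) (HE : forall j : 'I_M, 'M[R[i]]_((k j).+1))
  (V : forall j : 'I_M, 'M[R[i]]_(n.+1 * (k j).+1))
  (tau : 'I_M -> R) (beta_ref : R) (sharp : protocol) :
  (0 < M)%N ->
  HS \is hermsymmx ->
  (forall j, HE j \is hermsymmx) ->
  (forall j, V j \is hermsymmx) ->
  (forall j, 0 < tau j) ->
  0 < beta_ref ->
  (exists zeta : 'I_M -> R, primitive_cp (Lsharp HS HE V tau beta_ref sharp zeta)) ->
  forall zeta alpha : 'I_M -> R,
    primitive_cp (Lsharpdual HS HE V tau beta_ref sharp zeta alpha) /\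
    0 < spectral_radius (Lsharpdual HS HE V tau beta_ref sharp zeta alpha).
Proof.
move=> M0 _ _ _ _ _ [zeta0 Hprim] zeta alpha.
have [I [J [F [D [HF HD HFD]]]]] := sharp_fam HS HE V tau beta_ref sharp zeta0 zeta alpha M0.
have Hp := primitive_transfer HF HD HFD Hprim.
by split => //; exact: prim_srad.
Qed.
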